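(* Let $k\ge0$ be an integer and let $G=(X\cup Y,E)$ be a bipartite graph that contains a vertex with more than $2k+2$ non-leaf neighbors. Then $G$ is not 2-layer $k$-planar.
   Context: A leaf is a vertex with exactly one neighbor. A 2-layer drawing of a bipartite graph $G=(X\cup Y,E)$ ($X\cap Y=\emptyset$, $E\subseteq X\times Y$) is a pair $(<_X,<_Y)$ of strict linear orders on $X$ and $Y$. Edges $\{x,y\},\{x',y'\}$ with $x\ne x'\in X$, $y\ne y'\in Y$ cross if $x<_Xx'$ and $y'<_Yy$. The drawing is $k$-planar if every edge crosses at most $k$ edges; $G$ is 2-layer $k$-planar if it admits such a drawing. *)

(* Defs.v *)
From mathcomp Require Import all_boot.
Set Implicit Arguments. Unset Strict Implicit. Unset Printing Implicit Defensive.

(* A bipartite graph G = (X ∪ Y, E) with finite disjoint vertex classes X, Y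
   (two separate finTypes) and edge set E ⊆ X × Y given by E : X -> Y -> bool. *)

Definition strict_linear_order (T : finType) (lt : rel T) : Prop :=
  (forall x, ~~ lt x x) /\
  (forall x y z, lt x y -> lt y z -> lt x z) /\
  (forall x y, x != y -> lt x y || lt y x).

Definition nbrX (X Y : finType) (E : X -> Y -> bool) (x : X) : {set Y} :=
  [set y | E x y].
Definition nbrY (X Y : finType) (E : X -> Y -> bool) (y : Y) : {set X} :=
  [set x | E x y].

Definition leafX (X Y : finType) (E : X -> Y -> bool) (x : X) : bool :=
  #|nbrX E x| == 1.
Definition leafY (X Y : finType) (E : X -> Y -> bool) (y : Y) : bool :=
  #|nbrY E y| == 1.

Definition cross (X Y : finType) (ltX : rel X) (ltY : rel Y)
  (e f : X * Y) : bool :=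
  [&& e.1 != f.1, e.2 != f.2 &
   (ltX e.1 f.1 && ltY f.2 e.2) || (ltX f.1 e.1 && ltY e.2 f.2)].

Definition is_edge (X Y : finType) (E : X -> Y -> bool) (e : X * Y) : bool :=
  E e.1 e.2.

Definition k_planar_drawing (X Y : finType) (E : X -> Y -> bool)
  (ltX : rel X) (ltY : rel Y) (k : nat) : Prop :=
  forall e : X * Y, is_edge E e ->
    #|[set f : X * Y | is_edge E f && cross ltX ltY e f]| <= k.

Definition two_layer_k_planar (X Y : finType) (E : X -> Y -> bool) (k : nat)
  : Prop :=
  exists (ltX : rel X) (ltY : rel Y),
    [/\ strict_linear_order ltX, strict_linear_order ltY &
        k_planar_drawing E ltX ltY k].

(* Main.v *)
Require Import Defs.
From mathcomp Require Import all_boot.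
From mathcomp Require Import zify.

Lemma median (T : finType) (lt : rel T) (S : {set T}) (k : nat) :
  strict_linear_order lt -> 2 * k + 2 < #|S| ->
  exists2 y, y \in S &
    (k < #|[set z in S | lt z y]|) && (k < #|[set z in S | lt y z]|).
Proof.
case=> irr [tr tot] hS.
pose r y := #|[set z in S | lt z y]|.
have rS : forall y, y \in S -> r y < #|S|.
  move=> y yS; apply: proper_card; apply/properP; split.
    by apply/subsetP=> w; rewrite inE => /andP[].
  by exists y => //; rewrite inE yS /= (negbTE (irr y)).
have rlt : forall y z, y \in S -> lt y z -> r y < r z.
  move=> y z yS yz; apply: proper_card; apply/properP; split.
    apply/subsetP=> w; rewrite !inE => /andP[-> wy] /=; exact: tr wy yz.
  by exists y; rewrite !inE ?yS ?yz // (negbTE (irr y)) andbF.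
have rinj : {in S &, injective r}.
  move=> y z yS zS ryz; apply/eqP; apply/negPn/negP=> nyz.
  case/orP: (tot _ _ nyz) => h.
    by have := rlt _ _ yS h; rewrite ryz ltnn.
  by have := rlt _ _ zS h; rewrite ryz ltnn.
pose s := map r (enum S).
have us : uniq s.
  rewrite map_inj_in_uniq ?enum_uniq // => a b; rewrite !mem_enum; exact: rinj.
have sub : {subset s <= iota 0 #|S|}.
  move=> i /mapP[y]; rewrite mem_enum => yS ->; rewrite mem_iota /= add0n.
  exact: rS.
have hsz : size (iota 0 #|S|) <= size s by rewrite size_iota size_map -cardE.
have [_ eqs] := uniq_min_size us sub hsz.
have : k.+1 \in s by rewrite eqs mem_iota /= add0n; lia.
case/mapP=> y; rewrite mem_enum => yS rk.
exists y => //; apply/andP; split; first by rewrite -/(r y) -rk.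
have sub2 : S \subset [set z in S | lt z y] :|: ([set y] :|: [set z in S | lt y z]).
  apply/subsetP=> z zS; rewrite !inE zS /=.
  case: (eqVneq z y) => [->|nzy]; first by rewrite orbT.
  by case/orP: (tot _ _ nzy) => ->; rewrite ?orbT.
have := subset_leq_card sub2.
have := leq_card_setU [set z in S | lt z y] ([set y] :|: [set z in S | lt y z]).
case=> h1 _.
have := leq_card_setU [set y] [set z in S | lt y z]; case=> h2 _.
rewrite cards1 in h2.
move: h1 h2; rewrite -/(r y) -rk; lia.
Qed.

Lemma other (T : finType) (P : {set T}) (a : T) :
  a \in P -> #|P| != 1 -> exists2 b, b \in P & b != a.
Proof.
move=> aP n1; case: (pickP [pred b | (b \in P) && (b != a)]) => [b /andP[]|none].
  by exists b.
exfalso; move/negP: n1; apply; apply/eqP; rewrite -(cards1 a); apply: eq_card => b.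
rewrite inE; case: (eqVneq b a) => [->|nba]; first by rewrite aP.
by have := none b; rewrite /= nba andbT => ->.
Qed.

Theorem mainTheorem9 (X Y : finType) (E : X -> Y -> bool) (k : nat) :
  ((exists x : X, #|[set y in nbrX E x | ~~ leafY E y]| > 2 * k + 2) \/
   (exists y : Y, #|[set x in nbrY E y | ~~ leafX E x]| > 2 * k + 2)) ->
  ~ two_layer_k_planar E k.
Proof.
move=> H [ltX [ltY [oX oY P]]].
have oX' := oX; have oY' := oY.
case: oX' => irrX [trX totX]; case: oY' => irrY [trY totY].
case: H => [[x hx]|[y hy]].
- have [y0 yS /andP[kb ka]] := median _ _ _ _ oY hx.
  move: (yS); rewrite !inE => /andP[Ex nl].
  have [x' x'N nx] : exists2 x', x' \in nbrY E y0 & x' != x.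
    by apply: (other _ (nbrY E y0)); rewrite ?inE.
  move: x'N; rewrite inE => Ex'.
  have := P (x', y0) Ex'.
  have nx' : x != x' by rewrite eq_sym.
  case/orP: (totX _ _ nx') => hxx.
  + have sub : (pair x) @: [set z in [set y in nbrX E x | ~~ leafY E y] | ltY y0 z]
       \subset [set f : X * Y | is_edge E f && cross ltX ltY (x', y0) f].
      apply/subsetP=> f /imsetP[z]; rewrite !inE => /andP[/andP[Ez _] yz] ->.
      rewrite /is_edge /cross /= Ez nx /= hxx yz orbT andbT.
      by apply/eqP=> e; move: yz; rewrite e; apply/negP; apply: irrY.
    move: (subset_leq_card sub); rewrite card_imset; last by move=> a b [].
    move=> h1 h2; have := leq_trans h1 h2; rewrite leqNgt ka //.
  + have sub : (pair x) @: [set z in [set y in nbrX E x | ~~ leafY E y] | ltY z y0]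
       \subset [set f : X * Y | is_edge E f && cross ltX ltY (x', y0) f].
      apply/subsetP=> f /imsetP[z]; rewrite !inE => /andP[/andP[Ez _] yz] ->.
      rewrite /is_edge /cross /= Ez nx /= hxx yz /= andbT.
      by apply/eqP=> e; move: yz; rewrite e; apply/negP; apply: irrY.
    move: (subset_leq_card sub); rewrite card_imset; last by move=> a b [].
    move=> h1 h2; have := leq_trans h1 h2; rewrite leqNgt kb //.
- have [x0 xS /andP[kb ka]] := median _ _ _ _ oX hy.
  move: (xS); rewrite !inE => /andP[Ey nl].
  have [y' y'N ny] : exists2 y', y' \in nbrX E x0 & y' != y.
    by apply: (other _ (nbrX E x0)); rewrite ?inE.
  move: y'N; rewrite inE => Ey'.
  have := P (x0, y') Ey'.
  have ny' : y != y' by rewrite eq_sym.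
  case/orP: (totY _ _ ny') => hyy.
  + have sub : (fun z => (z, y)) @: [set z in [set x in nbrY E y | ~~ leafX E x] | ltX x0 z]
       \subset [set f : X * Y | is_edge E f && cross ltX ltY (x0, y') f].
      apply/subsetP=> f /imsetP[z]; rewrite !inE => /andP[/andP[Ez _] xz] ->.
      rewrite /is_edge /cross /= Ez ny /= hyy xz /= andbT.
      by apply/eqP=> e; move: xz; rewrite e; apply/negP; apply: irrX.
    move: (subset_leq_card sub); rewrite card_imset; last by move=> a b [].
    move=> h1 h2; have := leq_trans h1 h2; rewrite leqNgt ka //.
  + have sub : (fun z => (z, y)) @: [set z in [set x in nbrY E y | ~~ leafX E x] | ltX z x0]
       \subset [set f : X * Y | is_edge E f && cross ltX ltY (x0, y') f].
      apply/subsetP=> f /imsetP[z]; rewrite !inE => /andP[/andP[Ez _] xz] ->.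
      rewrite /is_edge /cross /= Ez ny /= hyy xz orbT andbT.
      by apply/eqP=> e; move: xz; rewrite e; apply/negP; apply: irrX.
    move: (subset_leq_card sub); rewrite card_imset; last by move=> a b [].
    move=> h1 h2; have := leq_trans h1 h2; rewrite leqNgt kb //.
Qed.
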